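(* Let $\epsilon=\epsilon_1\cdots\epsilon_n$ be an inversion sequence, and let $\epsilon'$ be the sequence obtained by applying Algorithm A (described below) to $\epsilon$. Then $\epsilon'$ is also an inversion sequence.
   Context: An inversion sequence of length $n$ is an integer sequence $\epsilon_1\cdots\epsilon_n$ with $0\le\epsilon_i<i$ for all $i$. The reduction of an integer word replaces each occurrence of its $k$-th smallest distinct value by $k-1$; a consecutive pattern $\underline{p_1p_2p_3p_4}$ occurs in a sequence at position $i$ if the reduction of its entries in positions $i,i+1,i+2,i+3$ equals $p_1p_2p_3p_4$. Let $p=\underline{0102}$ and $q=\underline{0112}$. Algorithm A, on input an integer sequence $\mathrm{seq}=\epsilon_1\cdots\epsilon_n$: let $E_p$, $E_q$ be the sets of positions of occurrences of $p$, resp. $q$, in the input sequence; set $\mathrm{last}:=$ null. For $i=1,2,\dots,n$ in order: let $N_p,N_q$ be the sets of positions of occurrences of $p$, resp. $q$, in the current sequence. If $i-2\in E_p$: set $\mathrm{last}:=\mathrm{seq}[i]$ and $\mathrm{seq}[i]:=\mathrm{seq}[i-1]$. Else if $i-2\in E_q$: set $\mathrm{last}:=\mathrm{seq}[i]$ and $\mathrm{seq}[i]:=\mathrm{seq}[i-2]$. Else if $i-2\in N_p$ or $i-2\in N_q$: swap the values of $\mathrm{seq}[i]$ and $\mathrm{last}$. Output $\mathrm{seq}$. *)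

(* Defs.v *)
From mathcomp Require Import all_boot.
Set Implicit Arguments. Unset Strict Implicit. Unset Printing Implicit Defensive.

(* Positions are 1-indexed as in the paper: seq[i] is [nth _ s (i-1)]. *)

Definition inversion_seq (e : seq nat) : Prop :=
  forall i, i < size e -> nth 0 e i < i.+1.

Definition reduce (w : seq nat) : seq nat :=
  [seq index x (sort leq (undup w)) | x <- w].

(* Working sequences carry [option nat] entries, [None] standing for the value
   "null" (which can only enter the sequence through a swap with last = null). *)
Definition window (s : seq (option nat)) (j : nat) : seq (option nat) :=
  [seq nth None s (j + k - 1) | k <- iota 0 4].

Definition occurs_at (pat : seq nat) (s : seq (option nat)) (j : nat) : bool :=
  [&& 1 <= j, j + 3 <= size s, all isSome (window s j)
    & reduce (pmap id (window s j)) == pat].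

Definition pat_p : seq nat := [:: 0; 1; 0; 2].
Definition pat_q : seq nat := [:: 0; 1; 1; 2].

(* One iteration (index i) of Algorithm A; s0 is the input sequence
   (used for E_p, E_q), st = (current sequence, last). *)
Definition stepA (s0 : seq (option nat)) (st : seq (option nat) * option nat)
    (i : nat) : seq (option nat) * option nat :=
  let: (s, last) := st in
  if occurs_at pat_p s0 (i - 2) then
    (set_nth None s i.-1 (nth None s (i - 2)), nth None s i.-1)
  else if occurs_at pat_q s0 (i - 2) then
    (set_nth None s i.-1 (nth None s (i - 3)), nth None s i.-1)
  else if occurs_at pat_p s (i - 2) || occurs_at pat_q s (i - 2) then
    (set_nth None s i.-1 last, nth None s i.-1)
  else (s, last).

Definition algorithmA (e : seq nat) : seq (option nat) :=
  let s0 := [seq Some x | x <- e] in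
  (foldl (stepA s0) (s0, None) (iota 1 (size e))).1.

(* Main.v *)
Require Import Defs.
From mathcomp Require Import all_boot.

Definition InvA (n : nat) (s0 : seq (option nat)) (i : nat)
  (st : seq (option nat) * option nat) : Prop :=
  [/\ size st.1 = n,
      (forall k, k < n -> exists2 v, nth None st.1 k = Some v & v <= k)
    & (st = (s0, None) \/ exists2 v, st.2 = Some v & v < i)].

Lemma stepA_inv n s0 i st : 1 <= i -> i <= n -> InvA n s0 i st ->
  InvA n s0 i.+1 (stepA s0 st i).
Proof.
move=> i1 iln [Hsz Hv Hl]; case: st Hsz Hv Hl => s last /= Hsz Hv Hl.
have Hi1 : i.-1 < n by rewrite prednK.
have Hset : forall y, y <= i.-1 ->
   (forall k, k < n -> exists2 v, nth None (set_nth None s i.-1 (Some y)) k = Some v & v <= k).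
  move=> y hy k kn; rewrite nth_set_nth /=; case: eqP => [->|_]; first by exists y.
  exact: Hv.
have Hsz' : forall y, size (set_nth None s i.-1 y) = n.
  by move=> y; rewrite size_set_nth Hsz; apply/maxn_idPr.
have [w Hw wle] := Hv _ Hi1.
have Hlast : exists2 v, nth None s i.-1 = Some v & v < i.+1.
  by exists w => //; apply: leq_trans wle _; rewrite leq_pred.
rewrite /stepA.
case: ifP => Ep.
  have i2n : i - 2 < n by apply: leq_ltn_trans Hi1; rewrite -subn1 leq_sub2l.
  have [v Hv2 vle] := Hv _ i2n.
  split; [exact: Hsz' | | by right].
  rewrite Hv2; apply: Hset; apply: leq_trans vle _; rewrite -subn1 leq_sub2l //.
case: ifP => Eq.
  have i3n : i - 3 < n by apply: leq_ltn_trans Hi1; rewrite -subn1 leq_sub2l.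
  have [v Hv2 vle] := Hv _ i3n.
  split; [exact: Hsz' | | by right].
  rewrite Hv2; apply: Hset; apply: leq_trans vle _; rewrite -subn1 leq_sub2l //.
case: Hl => [Heq|[v Hv' vlt]].
  case: Heq => Es El; subst s last.
  by rewrite Ep Eq; split => //; left.
case: ifP => _; last first.
  by split => //; right; exists v => //; apply: ltnW.
split; [exact: Hsz' | | by right].
rewrite Hv'; apply: Hset; by rewrite -ltnS prednK.
Qed.

Lemma fold_inv n s0 m : forall i st, 1 <= i -> i + m <= n.+1 -> InvA n s0 i st ->
  InvA n s0 (i + m) (foldl (stepA s0) st (iota i m)).
Proof.
elim: m => [|m IH] i st i1 im H /=; first by rewrite addn0.
rewrite -addSnnS; apply: IH => //; first by rewrite addSnnS.
apply: stepA_inv => //; rewrite -ltnS; apply: leq_trans im; by rewrite -addn1 leq_add2l.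
Qed.

Theorem proposition1 (e : seq nat) :
  inversion_seq e ->
  exists e' : seq nat, algorithmA e = [seq Some x | x <- e'] /\ inversion_seq e'.
Proof.
move=> He.
set s0 := [seq Some x | x <- e].
have H0 : InvA (size e) s0 1 (s0, None).
  split => /=; [by rewrite size_map | | by left].
  move=> k kn; exists (nth 0 e k); first by rewrite (nth_map 0).
  by have := He k kn.
have [Hsz Hv _] := @fold_inv (size e) s0 (size e) 1 _ (isT : 0 < 1) (leqnn _) H0.
rewrite /algorithmA -/s0.
set s := (foldl _ _ _).1 in Hsz Hv *.
exists [seq odflt 0 o | o <- s]; split.
  apply: (@eq_from_nth _ None); first by rewrite !size_map.
  move=> k; rewrite Hsz => kn.
  rewrite (nth_map 0); last by rewrite size_map Hsz.
  rewrite (nth_map None) ?Hsz //.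
  by have [v -> _] := Hv k kn.
move=> k; rewrite size_map Hsz => kn.
rewrite (nth_map None) ?Hsz //.
by have [v -> /= ] := Hv k kn.
Qed.
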